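(* Let $H$ be as in the context. Then, as $p\to0$, \[ H(p)\sim(\sigma p)^{2/\mu}\left(2\Gamma(1-\mu)\right)^{-1/\mu}. \]
   Context: Fix $\mu\in(0,1)$, $\sigma>0$. Let $\Phi(a)=\mu(1+a)^{-1-\mu}$ for $a\ge0$ and $\omega(z)=\frac{1}{\sigma\sqrt{2\pi}}e^{-z^2/(2\sigma^2)}$ (a Gaussian of variance $\sigma^2$). For $p\in\mathbb{R}$, $H(p)\ge0$ is the unique solution of $\int_0^\infty\Phi(a)e^{-aH(p)}\,\mathrm{d}a\cdot\int_{\mathbb{R}}\omega(z)e^{zp}\,\mathrm{d}z=1$. $\Gamma$ denotes the Gamma function. *)

(* Defs.v *)
From Stdlib Require Import Reals.
From Coquelicot Require Import Coquelicot.
Open Scope R_scope.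

Definition Gamma (x : R) : R :=
  RInt_gen (fun t => Rpower t (x - 1) * exp (- t)) (at_right 0) (Rbar_locally p_infty).

Definition Phi (mu a : R) : R := mu * Rpower (1 + a) (- 1 - mu).

Definition omega (sigma z : R) : R :=
  / (sigma * sqrt (2 * PI)) * exp (- z ^ 2 / (2 * sigma ^ 2)).

(* h is a (nonnegative) solution of the defining equation for H(p):
   (int_0^oo Phi(a) e^{-a h} da) * (int_R omega(z) e^{z p} dz) = 1 *)
Definition H_equation (mu sigma p h : R) : Prop :=
  0 <= h /\
  exists I1 I2 : R,
    is_RInt_gen (fun a => Phi mu a * exp (- (a * h))) (at_point 0) (Rbar_locally p_infty) I1 /\
    is_RInt_gen (fun z => omega sigma z * exp (z * p)) (Rbar_locally m_infty) (Rbar_locally p_infty) I2 /\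
    I1 * I2 = 1.

(* Main.v *)
Require Import Defs.
From Stdlib Require Import Reals Lra Classical.
From Coquelicot Require Import Coquelicot.
Open Scope R_scope.

Lemma ball_R (x y e : R) : ball x e y <-> Rabs (y - x) < e.
Proof. unfold ball; simpl; unfold AbsRing_ball, minus, plus, opp, abs; simpl. tauto. Qed.

Lemma gen_p_to (f : R -> R) a l : is_RInt_gen f (at_point a) (Rbar_locally p_infty) l ->
  forall e, 0 < e -> exists M, forall b, M < b -> exists y, is_RInt f a b y /\ Rabs (y - l) < e.
Proof.
  intros H e He.
  destruct (H (ball l (mkposreal e He))) as [Q R HQ HR HP].
  { exists (mkposreal e He); auto. }
  destruct HR as [M HM]. exists M. intros b Hb.
  destruct (HP a b HQ (HM b Hb)) as [y [Hy1 Hy2]].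
  exists y; split; auto.
Qed.

Lemma gen_p_of (f : R -> R) a l :
  (forall e, 0 < e -> exists M, forall b, M < b -> exists y, is_RInt f a b y /\ Rabs (y - l) < e) ->
  is_RInt_gen f (at_point a) (Rbar_locally p_infty) l.
Proof.
  intros H P [eps Heps].
  destruct (H eps (cond_pos eps)) as [M HM].
  apply Filter_prod with (fun x => x = a) (fun b => M < b).
  - reflexivity.
  - exists M; auto.
  - intros x y -> Hy. destruct (HM y Hy) as [z [Hz1 Hz2]]. exists z; split; [exact Hz1|].
    apply Heps. apply ball_R. exact Hz2.
Qed.

Lemma gen_mp_of (f : R -> R) l :
  (forall e, 0 < e -> exists M, forall a b, a < - M -> M < b -> exists y, is_RInt f a b y /\ Rabs (y - l) < e) ->
  is_RInt_gen f (Rbar_locally m_infty) (Rbar_locally p_infty) l.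
Proof.
  intros H P [eps Heps].
  destruct (H eps (cond_pos eps)) as [M HM].
  apply Filter_prod with (fun x => x < - M) (fun b => M < b).
  - exists (-M); auto.
  - exists M; auto.
  - intros x y Hx Hy. destruct (HM x y Hx Hy) as [z [Hz1 Hz2]]. exists z; split; [exact Hz1|].
    apply Heps. apply ball_R. exact Hz2.
Qed.

Lemma gen_r_of (f : R -> R) l :
  (forall e, 0 < e -> exists d, 0 < d /\ exists M, forall a b, 0 < a < d -> M < b -> exists y, is_RInt f a b y /\ Rabs (y - l) < e) ->
  is_RInt_gen f (at_right 0) (Rbar_locally p_infty) l.
Proof.
  intros H P [eps Heps].
  destruct (H eps (cond_pos eps)) as [d [Hd [M HM]]].
  apply Filter_prod with (fun x => 0 < x < d) (fun b => M < b).
  - exists (mkposreal d Hd). intros y Hy Hy0. apply ball_R in Hy. simpl in Hy.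
    split; [exact Hy0|]. apply Rabs_lt_between in Hy. rewrite Rminus_0_r in Hy. destruct Hy; assumption.
  - exists M; auto.
  - intros x y Hx Hy. destruct (HM x y Hx Hy) as [z [Hz1 Hz2]]. exists z; split; [exact Hz1|].
    apply Heps. apply ball_R. exact Hz2.
Qed.

Definition gs (x : R) := exp (- (x * x)).

Lemma gs_cont x : continuous gs x.
Proof.
  apply (@ex_derive_continuous R_AbsRing R_NormedModule). unfold gs. auto_derive. auto.
Qed.

Lemma gs_ex a b : ex_RInt gs a b.
Proof. apply (@ex_RInt_continuous R_CompleteNormedModule). intros; apply gs_cont. Qed.

Definition Sg (x : R) : R := RInt gs 0 x.

Lemma S_deriv x : is_derive Sg x (gs x).
Proof.
  apply is_derive_RInt with (a := 0).
  - exists (mkposreal 1 Rlt_0_1). intros y _. apply (RInt_correct (V:=R_CompleteNormedModule)), gs_ex.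
  - apply gs_cont.
Qed.

Definition uf (u t : R) := exp (- (u * u * (1 + t * t))) / (1 + t * t).

Definition Ug (x : R) : R := RInt (fun t => uf x t) 0 1.

Lemma pos1 t : 0 < 1 + t * t.
Proof. nra. Qed.

Lemma uf_deriv u t : is_derive (fun z => uf z t) u (- 2 * u * exp (- (u * u * (1 + t * t)))).
Proof.
  unfold uf. auto_derive.
  - generalize (pos1 t); lra.
  - field. generalize (pos1 t); lra.
Qed.

Lemma uf_cont_t u t : continuous (uf u) t.
Proof.
  apply (@ex_derive_continuous R_AbsRing R_NormedModule). unfold uf. auto_derive. generalize (pos1 t); lra.
Qed.

Lemma U_deriv x : is_derive Ug x (RInt (fun t => - 2 * x * exp (- (x * x * (1 + t * t)))) 0 1).
Proof.
  unfold Ug.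
  assert (E : RInt (fun t => - 2 * x * exp (- (x * x * (1 + t * t)))) 0 1 =
              RInt (fun t => Derive (fun u => uf u t) x) 0 1).
  { apply RInt_ext. intros t _. symmetry. apply is_derive_unique. apply uf_deriv. }
  rewrite E.
  apply is_derive_RInt_param.
  - exists (mkposreal 1 Rlt_0_1). intros y _ t _. eexists. apply uf_deriv.
  - intros t _.
    apply continuity_2d_pt_ext with (fun u v => - 2 * u * exp (- (u * u * (1 + v * v)))).
    { intros u v. symmetry. apply is_derive_unique. apply uf_deriv. }
    apply continuity_2d_pt_mult.
    + apply continuity_2d_pt_mult. apply continuity_2d_pt_const. apply continuity_2d_pt_id1.
    + apply continuity_1d_2d_pt_comp with (f := exp) (g := fun u v => - (u * u * (1 + v * v))).
      * apply derivable_continuous_pt. apply derivable_pt_exp.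
      * apply continuity_2d_pt_opp. apply continuity_2d_pt_mult.
        apply continuity_2d_pt_mult; apply continuity_2d_pt_id1.
        apply continuity_2d_pt_plus. apply continuity_2d_pt_const.
        apply continuity_2d_pt_mult; apply continuity_2d_pt_id2.
  - exists (mkposreal 1 Rlt_0_1). intros y _. apply (@ex_RInt_continuous R_CompleteNormedModule). intros; apply uf_cont_t.
Qed.

Lemma U_deriv2 (x : R) : is_derive Ug x (- 2 * gs x * Sg x).
Proof.
  eapply is_derive_ext; [intros; reflexivity|].
  replace (- 2 * gs x * Sg x) with (RInt (fun t => - 2 * x * exp (- (x * x * (1 + t * t)))) 0 1).
  apply U_deriv.
  rewrite (RInt_ext _ (fun t => scal (- 2 * gs x) (scal x (gs (x * t + 0))))).
  2:{ intros t _. unfold scal; simpl; unfold mult; simpl. unfold gs.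
      replace (- (x * x * (1 + t * t))) with (- (x * x) + - ((x * t + 0) * (x * t + 0))) by ring.
      rewrite exp_plus. ring. }
  rewrite (RInt_scal (V:=R_CompleteNormedModule)).
  2:{ apply (@ex_RInt_continuous R_CompleteNormedModule). intros z _.
      apply (@ex_derive_continuous R_AbsRing R_NormedModule).
      unfold gs, scal; simpl; unfold mult; simpl. auto_derive; auto. }
  rewrite (RInt_comp_lin (V:=R_CompleteNormedModule)) by apply gs_ex.
  unfold Sg. unfold scal; simpl; unfold mult; simpl.
  replace (x * 0 + 0) with 0 by ring. replace (x * 1 + 0) with x by ring. ring.
Qed.

Lemma V_deriv (x : R) : is_derive (fun x => Sg x * Sg x + Ug x) x 0.
Proof.
  replace 0 with (gs x * Sg x + Sg x * gs x + (- 2 * gs x * Sg x)) by ring.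
  apply (is_derive_plus (K:=R_AbsRing) (V:=R_NormedModule)).
  apply (is_derive_mult (K:=R_AbsRing)); try apply S_deriv.
  intros; simpl; unfold mult; simpl; ring.
  apply U_deriv2.
Qed.

Lemma uf0 t : uf 0 t = / (1 + t * t).
Proof. unfold uf. replace (- (0 * 0 * (1 + t * t))) with 0 by ring.
  rewrite exp_0. field. generalize (pos1 t); lra. Qed.

Lemma V_const (x : R) : Sg x * Sg x + Ug x = PI / 4.
Proof.
  assert (H0 : Sg 0 * Sg 0 + Ug 0 = PI / 4).
  { unfold Sg. rewrite RInt_point. unfold Ug.
    rewrite (RInt_ext _ (fun t => / (1 + t * t))).
    2:{ intros t _. apply uf0. }
    rewrite (is_RInt_unique _ 0 1 (atan 1 - atan 0)).
    rewrite atan_1, atan_0. unfold zero; simpl. ring.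
    apply (is_RInt_derive (V:=R_CompleteNormedModule) atan).
    - intros z _. eapply is_derive_ext; [intros; reflexivity|].
      replace (/ (1 + z * z)) with (/ (1 + z²)) by (unfold Rsqr; reflexivity).
      apply is_derive_atan.
    - intros z _. apply (@ex_derive_continuous R_AbsRing R_NormedModule). auto_derive.
      generalize (pos1 z); lra. }
  rewrite <- H0.
  destruct (Req_dec x 0) as [->|Hx]; [reflexivity|].
  destruct (MVT_gen (fun x => Sg x * Sg x + Ug x) 0 x (fun _ => 0)) as [c [_ Hc]].
  - intros; apply V_deriv.
  - intros y _. apply (proj2 (continuity_pt_filterlim _ _)).
    apply (@ex_derive_continuous R_AbsRing R_NormedModule (fun x => Sg x * Sg x + Ug x)).
    eexists; apply V_deriv.
  - lra.
Qed.

Lemma uf_ex x : ex_RInt (uf x) 0 1.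
Proof. apply (@ex_RInt_continuous R_CompleteNormedModule). intros; apply uf_cont_t. Qed.

Lemma U_bounds x : 0 <= Ug x <= gs x.
Proof.
  split.
  - apply RInt_ge_0; [lra| apply uf_ex |]. intros t _. unfold uf.
    apply Rlt_le, Rdiv_lt_0_compat; [apply exp_pos| apply pos1].
  - unfold Ug. replace (gs x) with (RInt (fun _ => gs x) 0 1).
    2:{ rewrite RInt_const. unfold scal; simpl; unfold mult; simpl. ring. }
    apply RInt_le; [lra| apply uf_ex | apply ex_RInt_const |].
    intros t Ht. unfold uf, gs.
    assert (H1 : exp (- (x * x * (1 + t * t))) <= exp (- (x * x))).
    { destruct (Req_dec (x*x*(t*t)) 0) as [E|E].
      - right. f_equal. nra.
      - left. apply exp_increasing. assert (0 <= x * x * (t * t)) by (apply Rmult_le_pos; nra). nra. }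
    assert (H2 : 0 < exp (- (x * x * (1 + t * t)))) by apply exp_pos.
    apply (Rmult_le_reg_r (1 + t * t)); [apply pos1|].
    unfold Rdiv. rewrite Rmult_assoc, Rinv_l by (generalize (pos1 t); lra).
    assert (0 <= exp (- (x * x)) * (t * t)). { apply Rmult_le_pos. left; apply exp_pos. nra. }
    nra.
Qed.

Lemma S_ge0 x : 0 <= x -> 0 <= Sg x.
Proof.
  intros Hx. apply RInt_ge_0; auto. apply gs_ex. intros; left; apply exp_pos.
Qed.

Lemma S_opp x : Sg (- x) = - Sg x.
Proof.
  unfold Sg.
  replace (RInt gs 0 (- x)) with (RInt gs (-1 * 0 + 0) (-1 * x + 0)) by (f_equal; ring).
  rewrite <- (RInt_comp_lin (V:=R_CompleteNormedModule) gs (-1) 0 0 x) by apply gs_ex.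
  rewrite (RInt_ext _ (fun y => opp (gs y))).
  2:{ intros y _. unfold gs, scal, opp; simpl; unfold mult; simpl.
      replace ((-1 * y + 0) * (-1 * y + 0)) with (y * y) by ring. ring. }
  rewrite (RInt_opp (V:=R_CompleteNormedModule)) by apply gs_ex. reflexivity.
Qed.

Definition rpi := sqrt PI / 2.

Lemma rpi_sq : rpi * rpi = PI / 4.
Proof.
  unfold rpi. assert (H := sqrt_sqrt PI (Rlt_le _ _ PI_RGT_0)).
  replace (sqrt PI / 2 * (sqrt PI / 2)) with (sqrt PI * sqrt PI / 4) by field. rewrite H. reflexivity.
Qed.

Lemma rpi_pos : 0 < rpi.
Proof. unfold rpi. assert (0 < sqrt PI) by (apply sqrt_lt_R0, PI_RGT_0). lra. Qed.

Lemma S_near x : 0 <= x -> Rabs (Sg x - rpi) <= gs x / rpi.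
Proof.
  intros Hx. assert (HV := V_const x). assert (HU := U_bounds x). assert (HS := S_ge0 x Hx).
  assert (Hr := rpi_pos). assert (Hr2 := rpi_sq).
  assert (E : (Sg x - rpi) * (Sg x + rpi) = - Ug x) by nra.
  rewrite Rabs_le_between. split.
  - apply (Rmult_le_reg_r (Sg x + rpi)); [lra|].
    assert (gs x / rpi * (Sg x + rpi) >= gs x).
    { unfold Rdiv. replace (gs x * / rpi * (Sg x + rpi)) with (gs x + gs x * Sg x / rpi) by (field; lra).
      assert (0 <= gs x * Sg x / rpi). { apply Rmult_le_pos; [apply Rmult_le_pos; lra| left; apply Rinv_0_lt_compat; lra]. }
      lra. }
    nra.
  - apply (Rmult_le_reg_r (Sg x + rpi)); [lra|].
    assert (0 <= gs x / rpi * (Sg x + rpi)). { apply Rmult_le_pos; [|lra]. unfold Rdiv. apply Rmult_le_pos; [lra| left; apply Rinv_0_lt_compat; lra]. }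
    nra.
Qed.

Lemma gs_small x : 1 <= x -> gs x <= / x.
Proof.
  intros Hx. unfold gs. rewrite exp_Ropp. apply Rinv_le_contravar; [lra|].
  assert (H := exp_ineq1 (x * x)). assert (0 < x * x) by nra. specialize (H ltac:(lra)). nra.
Qed.

Lemma gauss_full e : 0 < e -> exists M, forall a b, a < - M -> M < b ->
  Rabs (RInt gs a b - 2 * rpi) < e.
Proof.
  intros He. assert (Hr := rpi_pos).
  exists (1 + 4 / (e * rpi)). intros a b Ha Hb.
  assert (Hk : 0 < 4 / (e * rpi)). { apply Rdiv_lt_0_compat; [lra| apply Rmult_lt_0_compat; lra]. }
  rewrite <- (RInt_Chasles (V:=R_CompleteNormedModule) gs a 0 b) by apply gs_ex.
  rewrite <- (opp_RInt_swap (V:=R_CompleteNormedModule)) by apply gs_ex.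
  change (RInt gs 0 b) with (Sg b). change (RInt gs 0 a) with (Sg a).
  unfold plus, opp; simpl.
  assert (Ea : Sg a = - Sg (- a)) by (rewrite S_opp; ring). rewrite Ea.
  assert (B1 := S_near b ltac:(lra)). assert (B2 := S_near (- a) ltac:(lra)).
  assert (G1 := gs_small b ltac:(lra)). assert (G2 := gs_small (- a) ltac:(lra)).
  assert (I1 : / b < e * rpi / 4).
  { replace (e * rpi / 4) with (/ (4 / (e * rpi))) by (field; lra). apply Rinv_lt_contravar; [nra| lra]. }
  assert (I2 : / (- a) < e * rpi / 4).
  { replace (e * rpi / 4) with (/ (4 / (e * rpi))) by (field; lra). apply Rinv_lt_contravar; [nra| lra]. }
  assert (J1 : gs b / rpi < e / 4).
  { apply Rlt_div_l; [lra|]. lra. }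
  assert (J2 : gs (-a) / rpi < e / 4).
  { apply Rlt_div_l; [lra|]. lra. }
  replace (- - Sg (- a) + Sg b - 2 * rpi) with ((Sg b - rpi) + (Sg (-a) - rpi)) by ring.
  eapply Rle_lt_trans; [apply Rabs_triang|]. lra.
Qed.

Lemma two_rpi : 2 * rpi = sqrt PI.
Proof. unfold rpi; field. Qed.

Lemma I2_value sigma p : 0 < sigma ->
  is_RInt_gen (fun z => omega sigma z * exp (z * p)) (Rbar_locally m_infty) (Rbar_locally p_infty)
    (exp (sigma ^ 2 * p ^ 2 / 2)).
Proof.
  intros Hs.
  set (s2 := sqrt 2). set (sp := sqrt PI).
  assert (Hs2 : s2 * s2 = 2) by (apply sqrt_sqrt; lra).
  assert (Hs2p : 0 < s2) by (apply sqrt_lt_R0; lra).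
  assert (Hspp : 0 < sp) by (apply sqrt_lt_R0, PI_RGT_0).
  assert (H2p : sqrt (2 * PI) = s2 * sp) by (apply sqrt_mult; [lra| left; apply PI_RGT_0]).
  set (u := / (sigma * s2)). set (v := - (sigma ^ 2 * p) * u).
  assert (Hu : 0 < u) by (apply Rinv_0_lt_compat, Rmult_lt_0_compat; lra).
  assert (Hu2 : u * u = / (2 * sigma ^ 2)).
  { unfold u. rewrite <- Rinv_mult. f_equal. replace (sigma * s2 * (sigma * s2)) with (sigma ^ 2 * (s2 * s2)) by ring.
    rewrite Hs2. ring. }
  set (k := exp (sigma ^ 2 * p ^ 2 / 2) / sp).
  assert (Hk : 0 < k) by (apply Rdiv_lt_0_compat; [apply exp_pos| lra]).
  assert (Pt : forall z, omega sigma z * exp (z * p) = k * (u * gs (u * z + v))).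
  { intros z. unfold omega, gs, k. rewrite H2p.
    replace (u * z + v) with (u * (z - sigma ^ 2 * p)) by (unfold v; ring).
    replace (u * (z - sigma ^ 2 * p) * (u * (z - sigma ^ 2 * p))) with ((u * u) * (z - sigma ^ 2 * p) ^ 2) by ring.
    rewrite Hu2.
    replace (exp (sigma ^ 2 * p ^ 2 / 2) / sp * (u * exp (- (/ (2 * sigma ^ 2) * (z - sigma ^ 2 * p) ^ 2))))
      with (/ (sigma * (s2 * sp)) * (exp (sigma ^ 2 * p ^ 2 / 2) * exp (- (/ (2 * sigma ^ 2) * (z - sigma ^ 2 * p) ^ 2))))
      by (unfold u; field; lra).
    rewrite Rmult_assoc, <- !exp_plus. f_equal. f_equal. field. lra. }
  apply gen_mp_of. intros e He.
  destruct (gauss_full (e / k) ltac:(apply Rdiv_lt_0_compat; lra)) as [M HM].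
  exists ((Rabs M + Rabs v) / u). intros a b Ha Hb.
  assert (Hua : u * a + v < - M).
  { assert (u * a < - (Rabs M + Rabs v)).
    { apply (Rmult_lt_compat_l u) in Ha; auto. replace (u * - ((Rabs M + Rabs v) / u)) with (- (Rabs M + Rabs v)) in Ha by (field; lra). exact Ha. }
    assert (H1 := Rle_abs M). assert (H2 := Rle_abs v). lra. }
  assert (Hub : M < u * b + v).
  { assert (Rabs M + Rabs v < u * b).
    { apply (Rmult_lt_compat_l u) in Hb; auto. replace (u * ((Rabs M + Rabs v) / u)) with (Rabs M + Rabs v) in Hb by (field; lra). exact Hb. }
    assert (H1 := Rle_abs M). assert (H2 := Rle_abs (- v)). rewrite Rabs_Ropp in H2. lra. }
  specialize (HM _ _ Hua Hub).
  exists (k * RInt gs (u * a + v) (u * b + v)). split.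
  - apply (is_RInt_ext (fun z => scal k (scal u (gs (u * z + v))))).
    { intros z _. rewrite Pt. reflexivity. }
    apply (is_RInt_scal (V:=R_NormedModule)).
    apply (is_RInt_comp_lin (V:=R_NormedModule)).
    apply (RInt_correct (V:=R_CompleteNormedModule)), gs_ex.
  - replace (exp (sigma ^ 2 * p ^ 2 / 2)) with (k * (2 * rpi)).
    2:{ unfold k. rewrite two_rpi. fold sp. field. lra. }
    rewrite <- Rmult_minus_distr_l, Rabs_mult, Rabs_pos_eq by lra.
    apply (Rmult_lt_compat_l k) in HM; auto. replace (k * (e / k)) with e in HM by (field; lra). exact HM.
Qed.

Lemma rp_deriv (c x : R) : 0 < x -> is_derive (fun t => Rpower t c) x (c * Rpower x (c - 1)).
Proof. intros Hx. apply is_derive_Reals. apply derivable_pt_lim_power; auto. Qed.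

Lemma rp_cont (c x : R) : 0 < x -> continuous (fun t => Rpower t c) x.
Proof. intros Hx. apply (@ex_derive_continuous R_AbsRing R_NormedModule). eexists. apply rp_deriv; auto. Qed.

Lemma rp_pos x c : 0 < Rpower x c.
Proof. unfold Rpower; apply exp_pos. Qed.

Lemma rp_one c : Rpower 1 c = 1.
Proof. unfold Rpower. rewrite ln_1, Rmult_0_r. apply exp_0. Qed.

Lemma rp_inv y z : 0 < y -> Rpower (/ y) z = / Rpower y z.
Proof. intros Hy. unfold Rpower. rewrite ln_Rinv by auto. rewrite <- exp_Ropp. f_equal. ring. Qed.

Lemma rp_m1 x c : 0 < x -> Rpower x (c - 1) = Rpower x c / x.
Proof.
  intros Hx. unfold Rminus. rewrite Rpower_plus, Rpower_Ropp, Rpower_1 by auto. reflexivity.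
Qed.

Lemma rp_cancel h m : 0 < h -> Rpower h m * Rpower h (- m) = 1.
Proof. intros Hh. rewrite <- Rpower_plus. replace (m + - m) with 0 by ring. apply Rpower_O; auto. Qed.

Lemma mono_sup (F : R -> R) (c K : R) :
  (forall x y, c < x -> x <= y -> F x <= F y) -> (forall x, c < x -> F x <= K) ->
  exists L, (forall x, c < x -> F x <= L) /\ (forall e, 0 < e -> exists x0, c < x0 /\ L - e < F x0).
Proof.
  intros Hm Hb.
  set (E := fun y => exists x, c < x /\ y = F x).
  assert (HE : bound E). { exists K. intros y [x [Hx ->]]. apply Hb; auto. }
  assert (HE2 : exists y, E y). { exists (F (c + 1)). exists (c + 1). split; [lra| reflexivity]. }
  destruct (completeness E HE HE2) as [L [HL1 HL2]].
  exists L. split.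
  - intros x Hx. apply HL1. exists x; auto.
  - intros e He. apply NNPP. intro Hn.
    assert (L <= L - e); [|lra].
    apply HL2. intros y [x [Hx ->]].
    destruct (Rle_dec (F x) (L - e)); auto.
    exfalso; apply Hn. exists x; split; auto; lra.
Qed.

Definition gf (mu s : R) := Rpower s (- mu) * exp (- s).

Lemma gf_cont mu s : 0 < s -> continuous (gf mu) s.
Proof.
  intros Hs. unfold gf.
  apply (continuous_mult (K:=R_AbsRing) (fun t => Rpower t (- mu)) (fun t => exp (- t))).
  apply rp_cont; auto.
  apply (@ex_derive_continuous R_AbsRing R_NormedModule). auto_derive. auto.
Qed.

Lemma gf_ex mu a b : 0 < a -> 0 < b -> ex_RInt (gf mu) a b.
Proof.
  intros Ha Hb. apply (@ex_RInt_continuous R_CompleteNormedModule). intros z Hz.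
  apply gf_cont. assert (0 < Rmin a b) by (apply Rmin_glb_lt; auto). lra.
Qed.

Lemma gf_pos mu s : 0 < gf mu s.
Proof. unfold gf. apply Rmult_lt_0_compat; [apply rp_pos| apply exp_pos]. Qed.

Lemma int_exp a b : is_RInt (fun s => exp (- s)) a b (exp (- a) - exp (- b)).
Proof.
  replace (exp (- a) - exp (- b)) with (minus ((fun s => - exp (- s)) b) ((fun s => - exp (- s)) a))
    by (unfold minus, plus, opp; simpl; ring).
  apply (is_RInt_derive (V:=R_CompleteNormedModule) (fun s => - exp (- s))).
  - intros x _. auto_derive; auto. ring.
  - intros x _. apply (@ex_derive_continuous R_AbsRing R_NormedModule). auto_derive. auto.
Qed.

Lemma int_pow mu a b : mu < 1 -> 0 < a -> 0 < b ->
  is_RInt (fun s => Rpower s (- mu)) a b ((Rpower b (1 - mu) - Rpower a (1 - mu)) / (1 - mu)).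
Proof.
  intros Hm Ha Hb.
  replace ((Rpower b (1 - mu) - Rpower a (1 - mu)) / (1 - mu)) with
    (minus ((fun s => scal (/ (1 - mu)) (Rpower s (1 - mu))) b) ((fun s => scal (/ (1 - mu)) (Rpower s (1 - mu))) a))
    by (unfold minus, plus, opp, scal; simpl; unfold mult; simpl; field; lra).
  assert (Hmin : 0 < Rmin a b) by (apply Rmin_glb_lt; auto).
  apply (is_RInt_derive (V:=R_CompleteNormedModule) (fun s => scal (/ (1 - mu)) (Rpower s (1 - mu)))).
  - intros x Hx.
    replace (Rpower x (- mu)) with (scal (/ (1 - mu)) ((1 - mu) * Rpower x (1 - mu - 1))).
    2:{ unfold scal; simpl; unfold mult; simpl. replace (1 - mu - 1) with (- mu) by ring. field. lra. }
    apply (is_derive_scal (fun s => Rpower s (1 - mu))).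
    apply rp_deriv. lra.
  - intros x Hx. apply rp_cont. lra.
Qed.

Lemma rp_le1 s mu : 1 <= s -> 0 <= mu -> Rpower s (- mu) <= 1.
Proof.
  intros Hs Hm. rewrite Rpower_Ropp. rewrite <- Rinv_1. apply Rinv_le_contravar; [lra|].
  rewrite <- (Rpower_O s) by lra. apply Rle_Rpower; auto.
Qed.

Lemma rp_anti s b mu : 0 < s <= b -> 0 <= mu -> Rpower b (- mu) <= Rpower s (- mu).
Proof.
  intros Hs Hm. rewrite !Rpower_Ropp. apply Rinv_le_contravar. apply rp_pos.
  apply Rle_Rpower_l; auto.
Qed.

Lemma G_ub1 mu a b : 0 < mu < 1 -> 0 < a <= b ->
  RInt (gf mu) a b <= (Rpower b (1 - mu) - Rpower a (1 - mu)) / (1 - mu).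
Proof.
  intros Hm Hab.
  rewrite <- (is_RInt_unique _ _ _ _ (int_pow mu a b ltac:(lra) ltac:(lra) ltac:(lra))).
  apply RInt_le; [lra| apply gf_ex; lra| eexists; apply int_pow; lra|].
  intros x Hx. unfold gf. assert (H1 := rp_pos x (- mu)).
  assert (exp (- x) <= 1). { rewrite <- exp_0. left. apply exp_increasing. lra. }
  nra.
Qed.

Lemma G_ub2 mu a b : 0 < mu < 1 -> 1 <= a <= b ->
  RInt (gf mu) a b <= exp (- a) - exp (- b).
Proof.
  intros Hm Hab.
  rewrite <- (is_RInt_unique _ _ _ _ (int_exp a b)).
  apply RInt_le; [lra| apply gf_ex; lra| eexists; apply int_exp|].
  intros x Hx. unfold gf. assert (H1 := rp_le1 x mu ltac:(lra) ltac:(lra)).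
  assert (H2 := exp_pos (- x)). nra.
Qed.

Lemma G_lb mu a b : 0 < mu < 1 -> 0 < a <= b ->
  Rpower b (- mu) * (exp (- a) - exp (- b)) <= RInt (gf mu) a b.
Proof.
  intros Hm Hab.
  assert (E : Rpower b (- mu) * (exp (- a) - exp (- b)) = RInt (fun s => Rpower b (- mu) * exp (- s)) a b).
  { symmetry. apply is_RInt_unique. apply (is_RInt_scal (V:=R_NormedModule) (fun s => exp (- s))). apply int_exp. }
  rewrite E.
  apply RInt_le; [lra| eexists; apply (is_RInt_scal (V:=R_NormedModule) (fun s => exp (- s))); apply int_exp | apply gf_ex; lra|].
  intros x Hx. unfold gf. assert (H1 := rp_anti x b mu ltac:(lra) ltac:(lra)).
  assert (H2 := exp_pos (- x)). nra.
Qed.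

Lemma G_ge0 mu a b : 0 < a <= b -> 0 <= RInt (gf mu) a b.
Proof.
  intros Hab. apply RInt_ge_0; [lra| apply gf_ex; lra|]. intros; left; apply gf_pos.
Qed.

Lemma G_chasles mu a b c : 0 < a -> 0 < b -> 0 < c ->
  RInt (gf mu) a b + RInt (gf mu) b c = RInt (gf mu) a c.
Proof.
  intros. apply (RInt_Chasles (V:=R_CompleteNormedModule)); apply gf_ex; auto.
Qed.

Lemma gamma_facts mu : 0 < mu < 1 -> exists S1 S2,
  (forall B, 1 <= B -> RInt (gf mu) 1 B <= S2) /\
  (forall e, 0 < e -> exists B0, 1 < B0 /\ forall B, B0 <= B -> S2 - e < RInt (gf mu) 1 B) /\
  (forall a, 0 < a <= 1 -> RInt (gf mu) a 1 <= S1) /\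
  (forall e, 0 < e -> exists d, 0 < d < 1 /\ forall a, 0 < a <= d -> S1 - e < RInt (gf mu) a 1) /\
  (forall h, 0 < h < 1 -> S1 <= RInt (gf mu) h 1 + Rpower h (1 - mu) / (1 - mu)) /\
  Gamma (1 - mu) = S1 + S2.
Proof.
  intros Hm.
  destruct (mono_sup (fun B => RInt (gf mu) 1 B) 1 1) as [S2 [HS2a HS2b]].
  { intros x y Hx Hxy. rewrite <- (G_chasles mu 1 x y) by lra.
    assert (HG := G_ge0 mu x y ltac:(lra)). lra. }
  { intros x Hx. assert (HG := G_ub2 mu 1 x Hm ltac:(lra)).
    assert (0 < exp (- x)) by apply exp_pos. assert (Hx1 : exp (- (1)) < exp 0) by (apply exp_increasing; lra). rewrite exp_0 in Hx1.
    lra. }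
  destruct (mono_sup (fun x => RInt (gf mu) (/ x) 1) 1 (/ (1 - mu))) as [S1 [HS1a HS1b]].
  { intros x y Hx Hxy.
    assert (0 < / y <= / x). { split. apply Rinv_0_lt_compat; lra. apply Rinv_le_contravar; lra. }
    assert (/ x < 1). { rewrite <- Rinv_1. apply Rinv_lt_contravar; lra. }
    rewrite <- (G_chasles mu (/ y) (/ x) 1) by lra.
    assert (HG := G_ge0 mu (/ y) (/ x) ltac:(lra)). lra. }
  { intros x Hx.
    assert (0 < / x < 1). { split. apply Rinv_0_lt_compat; lra. rewrite <- Rinv_1. apply Rinv_lt_contravar; lra. }
    assert (HG := G_ub1 mu (/ x) 1 Hm ltac:(lra)). rewrite rp_one in HG.
    assert (H2 := rp_pos (/ x) (1 - mu)).
    apply (Rle_trans _ _ _ HG). unfold Rdiv. rewrite <- (Rmult_1_l (/ (1 - mu))) at 2. apply Rmult_le_compat_r.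
    left; apply Rinv_0_lt_compat; lra. lra. }
  assert (S2a : forall B, 1 <= B -> RInt (gf mu) 1 B <= S2).
  { intros B HB. destruct (Rle_lt_or_eq_dec 1 B HB) as [H|H]. apply HS2a; auto.
    subst B. rewrite RInt_point. specialize (HS2a 2 ltac:(lra)). simpl in HS2a.
    assert (HG := G_ge0 mu 1 2 ltac:(lra)). unfold zero; simpl. lra. }
  assert (S2b : forall e, 0 < e -> exists B0, 1 < B0 /\ forall B, B0 <= B -> S2 - e < RInt (gf mu) 1 B).
  { intros e He. destruct (HS2b e He) as [x0 [Hx0 Hx0']]. exists x0. split; auto.
    intros B HB. simpl in Hx0'. eapply Rlt_le_trans; [apply Hx0'|].
    rewrite <- (G_chasles mu 1 x0 B) by lra. assert (HG := G_ge0 mu x0 B ltac:(lra)). lra. }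
  assert (S1a : forall a, 0 < a <= 1 -> RInt (gf mu) a 1 <= S1).
  { intros a Ha. destruct (Rle_lt_or_eq_dec a 1 (proj2 Ha)) as [H|H].
    - specialize (HS1a (/ a)). simpl in HS1a. rewrite Rinv_inv in HS1a. apply HS1a.
      rewrite <- Rinv_1. apply Rinv_lt_contravar; lra.
    - subst a. rewrite RInt_point. specialize (HS1a 2 ltac:(lra)). simpl in HS1a.
      assert (HG := G_ge0 mu (/ 2) 1 ltac:(lra)). unfold zero; simpl. lra. }
  assert (S1b : forall e, 0 < e -> exists d, 0 < d < 1 /\ forall a, 0 < a <= d -> S1 - e < RInt (gf mu) a 1).
  { intros e He. destruct (HS1b e He) as [x0 [Hx0 Hx0']]. simpl in Hx0'. exists (/ x0). split.
    { split. apply Rinv_0_lt_compat; lra. rewrite <- Rinv_1. apply Rinv_lt_contravar; lra. }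
    intros a Ha. eapply Rlt_le_trans; [apply Hx0'|].
    assert (/ x0 < 1). { rewrite <- Rinv_1. apply Rinv_lt_contravar; lra. }
    rewrite <- (G_chasles mu a (/ x0) 1) by lra. assert (HG := G_ge0 mu a (/ x0) ltac:(lra)). lra. }
  exists S1, S2. split; [exact S2a|]. split; [exact S2b|]. split; [exact S1a|]. split; [exact S1b|]. split.
  - intros h Hh. apply Rnot_lt_le. intros Hlt.
    set (e := S1 - (RInt (gf mu) h 1 + Rpower h (1 - mu) / (1 - mu))).
    destruct (S1b e ltac:(unfold e; lra)) as [d [Hd Hd']].
    set (a := Rmin d (h / 2)).
    assert (Ha : 0 < a <= d /\ a < h). { unfold a. split. split. apply Rmin_glb_lt; lra. apply Rmin_l.
      eapply Rle_lt_trans; [apply Rmin_r| lra]. }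
    specialize (Hd' a ltac:(lra)).
    rewrite <- (G_chasles mu a h 1) in Hd' by lra.
    assert (H1 := G_ub1 mu a h Hm ltac:(lra)).
    assert (H2 := rp_pos a (1 - mu)).
    assert (Rpower a (1 - mu) / (1 - mu) > 0). { apply Rdiv_lt_0_compat; lra. }
    unfold Rdiv in *. unfold e in Hd'.
    assert (Eq : (Rpower h (1 - mu) - Rpower a (1 - mu)) * / (1 - mu) = Rpower h (1 - mu) * / (1 - mu) - Rpower a (1 - mu) * / (1 - mu)) by ring.
    lra.
  - unfold Gamma. replace (1 - mu - 1) with (- mu) by ring. fold (gf mu).
    apply is_RInt_gen_unique. apply gen_r_of. intros e He.
    destruct (S1b (e / 2) ltac:(lra)) as [d [Hd Hd']].
    destruct (S2b (e / 2) ltac:(lra)) as [B0 [HB0 HB0']].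
    exists d. split; [lra|]. exists B0. intros a b Ha Hb.
    exists (RInt (gf mu) a 1 + RInt (gf mu) 1 b). split.
    + apply (is_RInt_Chasles (V:=R_NormedModule) (gf mu) a 1 b); apply (RInt_correct (V:=R_CompleteNormedModule)); apply gf_ex; lra.
    + specialize (Hd' a ltac:(lra)). specialize (HB0' b ltac:(lra)).
      assert (H1 := S1a a ltac:(lra)). assert (H2 := S2a b ltac:(lra)).
      apply Rabs_lt_between. lra.
Qed.

Definition qf (mu h a : R) := Rpower (1 + a) (- mu) * exp (- (a * h)).

Lemma A_int mu h b : 0 < mu < 1 -> 0 < h -> 0 <= b ->
  is_RInt (fun a => Phi mu a * exp (- (a * h))) 0 b
   (1 - Rpower (1 + b) (- mu) * exp (- (b * h)) - Rpower h mu * exp h * RInt (gf mu) h (h * (1 + b))).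
Proof.
  intros Hm Hh Hb.
  set (df := fun a => Phi mu a * exp (- (a * h)) + h * qf mu h a).
  assert (I1 : is_RInt df 0 b (minus ((fun a => - qf mu h a) b) ((fun a => - qf mu h a) 0))).
  { apply (is_RInt_derive (V:=R_CompleteNormedModule) (fun a => - qf mu h a)).
    - intros x Hx. rewrite Rmin_left, Rmax_right in Hx by lra.
      unfold df, qf, Phi, Rpower. auto_derive. lra.
      replace ((-1 - mu) * ln (1 + x)) with (- mu * ln (1 + x) + - ln (1 + x)) by ring.
      rewrite (exp_plus (- mu * ln (1 + x))), (exp_Ropp (ln (1 + x))), (exp_ln (1 + x)) by lra. field. lra.
    - intros x Hx. rewrite Rmin_left, Rmax_right in Hx by lra.
      apply (@ex_derive_continuous R_AbsRing R_NormedModule).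
      unfold df, qf, Phi, Rpower. auto_derive. lra. }
  assert (I2 : is_RInt (fun a => h * qf mu h a) 0 b (Rpower h mu * exp h * RInt (gf mu) h (h * (1 + b)))).
  { apply (is_RInt_ext (fun y => scal (Rpower h mu * exp h) (scal h (gf mu (h * y + h))))).
    - intros y Hy. rewrite Rmin_left, Rmax_right in Hy by lra.
      unfold scal; simpl; unfold mult; simpl. unfold gf, qf.
      replace (h * y + h) with (h * (1 + y)) by ring.
      rewrite <- Rpower_mult_distr by lra.
      replace (- (h * (1 + y))) with (- h + - (y * h)) by ring. rewrite exp_plus.
      assert (E1 := rp_cancel h mu Hh). rewrite exp_Ropp.
      assert (E2 : exp h * / exp h = 1) by (apply Rinv_r; apply Rgt_not_eq, exp_pos).
      transitivity (h * Rpower (1 + y) (- mu) * exp (- (y * h)) * (Rpower h mu * Rpower h (- mu)) * (exp h * / exp h)); [ring|].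
      rewrite E1, E2. ring.
    - apply (is_RInt_scal (V:=R_NormedModule)).
      replace (h * (1 + b)) with (h * b + h) by ring.
      apply (is_RInt_comp_lin (V:=R_NormedModule) (gf mu) h h 0 b).
      replace (h * 0 + h) with h by ring.
      apply (RInt_correct (V:=R_CompleteNormedModule)). apply gf_ex; nra. }
  assert (I3 := is_RInt_minus (V:=R_NormedModule) _ _ _ _ _ _ I1 I2).
  replace (1 - Rpower (1 + b) (- mu) * exp (- (b * h)) - Rpower h mu * exp h * RInt (gf mu) h (h * (1 + b)))
    with (minus (minus ((fun a => - qf mu h a) b) ((fun a => - qf mu h a) 0)) (Rpower h mu * exp h * RInt (gf mu) h (h * (1 + b)))).
  2:{ unfold minus, plus, opp, qf; simpl. rewrite Rplus_0_r, rp_one. replace (- (0 * h)) with 0 by ring. rewrite exp_0. ring. }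
  eapply is_RInt_ext; [|exact I3].
  intros x _. unfold df, minus, plus, opp; simpl. ring.
Qed.

Lemma eq_eps x y : (forall e, 0 < e -> Rabs (x - y) < e) -> x = y.
Proof.
  intros H. destruct (Req_dec (x - y) 0) as [E|E]; [lra|].
  assert (Hp : 0 < Rabs (x - y)) by (apply Rabs_pos_lt; auto).
  specialize (H _ Hp). lra.
Qed.

Lemma expm_small x : 0 <= x -> exp (- x) <= / (1 + x).
Proof.
  intros Hx. rewrite exp_Ropp. apply Rinv_le_contravar; [lra|]. apply exp_ineq1_le.
Qed.

Lemma K_val mu h I1 : 0 < mu < 1 -> 0 < h ->
  is_RInt_gen (fun a => Phi mu a * exp (- (a * h))) (at_point 0) (Rbar_locally p_infty) I1 ->
  forall e, 0 < e -> exists M, forall b, M < b -> 0 <= b /\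
    Rabs (1 - Rpower (1 + b) (- mu) * exp (- (b * h)) - Rpower h mu * exp h * RInt (gf mu) h (h * (1 + b)) - I1) < e.
Proof.
  intros Hm Hh HI e He.
  destruct (gen_p_to _ _ _ HI e He) as [M HM].
  exists (Rmax M 0). intros b Hb.
  assert (Hb0 : 0 <= b) by (generalize (Rmax_r M 0); lra).
  split; auto.
  destruct (HM b (Rle_lt_trans _ _ _ (Rmax_l M 0) Hb)) as [y [Hy1 Hy2]].
  assert (Hy := A_int mu h b Hm Hh Hb0).
  apply (is_RInt_unique (V:=R_CompleteNormedModule)) in Hy. apply (is_RInt_unique (V:=R_CompleteNormedModule)) in Hy1. rewrite <- Hy, Hy1. exact Hy2.
Qed.

Lemma K_lower mu h I1 : 0 < mu < 1 -> 0 < h ->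
  is_RInt_gen (fun a => Phi mu a * exp (- (a * h))) (at_point 0) (Rbar_locally p_infty) I1 ->
  Rpower h mu * exp h * RInt (gf mu) h (h + 1) <= 1 - I1.
Proof.
  intros Hm Hh HI. apply Rnot_lt_le. intros Hlt.
  set (C := Rpower h mu * exp h).
  assert (HC : 0 < C) by (apply Rmult_lt_0_compat; [apply rp_pos| apply exp_pos]).
  set (e := C * RInt (gf mu) h (h + 1) - (1 - I1)).
  destruct (K_val mu h I1 Hm Hh HI e ltac:(unfold e, C in *; lra)) as [M HM].
  set (b := Rmax M 0 + / h + 1).
  assert (Hb : M < b). { unfold b. assert (H1 := Rmax_l M 0). assert (0 < / h) by (apply Rinv_0_lt_compat; lra). lra. }
  destruct (HM b Hb) as [Hb0 Hv].
  assert (Hhb : h + 1 <= h * (1 + b)).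
  { unfold b. assert (H1 := Rmax_r M 0). replace (h * (1 + (Rmax M 0 + / h + 1))) with (h * (2 + Rmax M 0) + 1) by (field; lra). nra. }
  assert (HG : RInt (gf mu) h (h + 1) <= RInt (gf mu) h (h * (1 + b))).
  { rewrite <- (G_chasles mu h (h + 1) (h * (1 + b))) by nra. assert (H := G_ge0 mu (h + 1) (h * (1 + b)) ltac:(lra)). lra. }
  assert (Hr : 0 < Rpower (1 + b) (- mu) * exp (- (b * h))) by (apply Rmult_lt_0_compat; [apply rp_pos| apply exp_pos]).
  apply Rabs_lt_between in Hv. fold C in Hv.
  assert (C * RInt (gf mu) h (h + 1) <= C * RInt (gf mu) h (h * (1 + b))) by (apply Rmult_le_compat_l; lra).
  unfold e in Hv. lra.
Qed.

Lemma K_exact mu h I1 S2 : 0 < mu < 1 -> 0 < h < 1 ->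
  (forall B, 1 <= B -> RInt (gf mu) 1 B <= S2) ->
  (forall e, 0 < e -> exists B0, 1 < B0 /\ forall B, B0 <= B -> S2 - e < RInt (gf mu) 1 B) ->
  is_RInt_gen (fun a => Phi mu a * exp (- (a * h))) (at_point 0) (Rbar_locally p_infty) I1 ->
  1 - I1 = Rpower h mu * exp h * (RInt (gf mu) h 1 + S2).
Proof.
  intros Hm Hh HS2a HS2b HI.
  set (C := Rpower h mu * exp h).
  assert (HC : 0 < C) by (apply Rmult_lt_0_compat; [apply rp_pos| apply exp_pos]).
  apply eq_eps. intros e He.
  destruct (K_val mu h I1 Hm ltac:(lra) HI (e / 3) ltac:(lra)) as [M HM].
  destruct (HS2b (e / (3 * C)) ltac:(apply Rdiv_lt_0_compat; lra)) as [B0 [HB0 HB0']].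
  set (b := Rmax M 0 + B0 / h + 3 / (e * h) + 1).
  assert (Hp1 : 0 < B0 / h) by (apply Rdiv_lt_0_compat; lra).
  assert (Hp2 : 0 < 3 / (e * h)) by (apply Rdiv_lt_0_compat; [lra| apply Rmult_lt_0_compat; lra]).
  assert (HMx := Rmax_l M 0). assert (HMx0 := Rmax_r M 0).
  assert (Hb : M < b) by (unfold b; lra).
  destruct (HM b Hb) as [Hb0 Hv].
  assert (HB : B0 <= h * (1 + b)).
  { unfold b. replace (h * (1 + (Rmax M 0 + B0 / h + 3 / (e * h) + 1))) with (B0 + h * (2 + Rmax M 0 + 3 / (e * h))) by (field; lra).
    assert (0 <= h * (2 + Rmax M 0 + 3 / (e * h))) by (apply Rmult_le_pos; lra). lra. }
  assert (Hbh : 3 / e < b * h).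
  { unfold b. replace ((Rmax M 0 + B0 / h + 3 / (e * h) + 1) * h) with ((Rmax M 0 + 1) * h + B0 + 3 / e) by (field; lra). nra. }
  rewrite <- (G_chasles mu h 1 (h * (1 + b))) in Hv by lra.
  specialize (HB0' _ HB). assert (HS := HS2a (h * (1 + b)) ltac:(lra)).
  assert (Hr1 : 0 < Rpower (1 + b) (- mu) * exp (- (b * h))) by (apply Rmult_lt_0_compat; [apply rp_pos| apply exp_pos]).
  assert (Hr2 : Rpower (1 + b) (- mu) * exp (- (b * h)) < e / 3).
  { assert (H1 := rp_le1 (1 + b) mu ltac:(lra) ltac:(lra)).
    assert (H2 := expm_small (b * h) ltac:(nra)).
    assert (H3 : / (1 + b * h) < e / 3).
    { replace (e / 3) with (/ (3 / e)) by (field; lra). apply Rinv_lt_contravar.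
      apply Rmult_lt_0_compat; [apply Rdiv_lt_0_compat|]; nra. lra. }
    assert (H4 := exp_pos (- (b * h))). nra. }
  assert (Hd1 : C * (S2 - RInt (gf mu) 1 (h * (1 + b))) < e / 3).
  { replace (e / 3) with (C * (e / (3 * C))) by (field; lra). apply Rmult_lt_compat_l; lra. }
  assert (Hd2 : 0 <= C * (S2 - RInt (gf mu) 1 (h * (1 + b)))) by (apply Rmult_le_pos; lra).
  fold C in Hv. apply Rabs_lt_between in Hv. apply Rabs_lt_between.
  assert (E : C * (RInt (gf mu) h 1 + RInt (gf mu) 1 (h * (1 + b))) = C * (RInt (gf mu) h 1 + S2) - C * (S2 - RInt (gf mu) 1 (h * (1 + b)))) by ring.
  rewrite E in Hv. lra.
Qed.

Lemma Phi_int0 mu b : 0 < mu < 1 -> 0 <= b ->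
  is_RInt (fun a => Phi mu a * exp (- (a * 0))) 0 b (1 - Rpower (1 + b) (- mu)).
Proof.
  intros Hm Hb.
  replace (1 - Rpower (1 + b) (- mu)) with (minus ((fun a => - Rpower (1 + a) (- mu)) b) ((fun a => - Rpower (1 + a) (- mu)) 0)).
  2:{ unfold minus, plus, opp; simpl. rewrite Rplus_0_r, rp_one. ring. }
  apply (is_RInt_derive (V:=R_CompleteNormedModule) (fun a => - Rpower (1 + a) (- mu))).
  - intros x Hx. rewrite Rmin_left, Rmax_right in Hx by lra.
    unfold Phi, Rpower. auto_derive. lra.
    replace (- (x * 0)) with 0 by ring. rewrite exp_0.
    replace ((-1 - mu) * ln (1 + x)) with (- mu * ln (1 + x) + - ln (1 + x)) by ring.
    rewrite (exp_plus (- mu * ln (1 + x))), (exp_Ropp (ln (1 + x))), (exp_ln (1 + x)) by lra. field. lra.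
  - intros x Hx. rewrite Rmin_left, Rmax_right in Hx by lra.
    apply (@ex_derive_continuous R_AbsRing R_NormedModule).
    unfold Phi, Rpower. auto_derive. lra.
Qed.

Lemma K_zero mu I1 : 0 < mu < 1 ->
  is_RInt_gen (fun a => Phi mu a * exp (- (a * 0))) (at_point 0) (Rbar_locally p_infty) I1 -> I1 = 1.
Proof.
  intros Hm HI. apply eq_eps. intros e He.
  destruct (gen_p_to _ _ _ HI (e / 2) ltac:(lra)) as [M HM].
  set (K := / (mu * (e / 2))).
  assert (HK : 0 < K) by (apply Rinv_0_lt_compat, Rmult_lt_0_compat; lra).
  set (b := Rmax M 0 + exp K).
  assert (HMx := Rmax_l M 0). assert (HMx0 := Rmax_r M 0). assert (HeK := exp_pos K).
  destruct (HM b ltac:(unfold b; lra)) as [y [Hy1 Hy2]].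
  assert (Hy := Phi_int0 mu b Hm ltac:(unfold b; lra)).
  apply (is_RInt_unique (V:=R_CompleteNormedModule)) in Hy. apply (is_RInt_unique (V:=R_CompleteNormedModule)) in Hy1.
  rewrite Hy in Hy1. subst y.
  assert (Hl : K < ln (1 + b)).
  { rewrite <- (ln_exp K) at 1. apply ln_increasing; auto. unfold b; lra. }
  assert (Hr : Rpower (1 + b) (- mu) < e / 2).
  { unfold Rpower. replace (- mu * ln (1 + b)) with (- (mu * ln (1 + b))) by ring.
    eapply Rle_lt_trans. apply expm_small. apply Rmult_le_pos; lra.
    replace (e / 2) with (/ (/ (e / 2))) by (field; lra). apply Rinv_lt_contravar.
    apply Rmult_lt_0_compat. apply Rinv_0_lt_compat; lra. assert (0 < mu * ln (1 + b)) by (apply Rmult_lt_0_compat; lra). lra.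
    assert (mu * K = / (e / 2)) by (unfold K; field; lra).
    assert (mu * K < mu * ln (1 + b)) by (apply Rmult_lt_compat_l; lra). lra. }
  assert (Hr0 := rp_pos (1 + b) (- mu)).
  apply Rabs_lt_between in Hy2. apply Rabs_lt_between. lra.
Qed.

Lemma per_p mu sigma p h : 0 < mu < 1 -> 0 < sigma -> p <> 0 -> H_equation mu sigma p h ->
  0 < h /\
  Rpower h mu * exp h * RInt (gf mu) h (h + 1) <= 1 - exp (- (sigma ^ 2 * p ^ 2 / 2)) /\
  (forall S2, (forall B, 1 <= B -> RInt (gf mu) 1 B <= S2) ->
    (forall e, 0 < e -> exists B0, 1 < B0 /\ forall B, B0 <= B -> S2 - e < RInt (gf mu) 1 B) ->
    h < 1 -> 1 - exp (- (sigma ^ 2 * p ^ 2 / 2)) = Rpower h mu * exp h * (RInt (gf mu) h 1 + S2)).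
Proof.
  intros Hm Hs Hp [Hh0 [I1 [I2 [HI1 [HI2 HI]]]]].
  assert (E2 : I2 = exp (sigma ^ 2 * p ^ 2 / 2)).
  { apply (is_RInt_gen_unique (V:=R_CompleteNormedModule)) in HI2. rewrite <- HI2. apply (is_RInt_gen_unique (V:=R_CompleteNormedModule)). apply I2_value; auto. }
  assert (E1 : I1 = exp (- (sigma ^ 2 * p ^ 2 / 2))).
  { rewrite E2 in HI. rewrite exp_Ropp. assert (H := exp_pos (sigma ^ 2 * p ^ 2 / 2)).
    apply (Rmult_eq_reg_r (exp (sigma ^ 2 * p ^ 2 / 2))); [|lra]. rewrite HI, Rinv_l; lra. }
  assert (Hx : 0 < sigma ^ 2 * p ^ 2 / 2).
  { assert (0 < sigma ^ 2) by (apply pow_lt; lra). assert (0 < p ^ 2) by (apply pow2_gt_0; auto). nra. }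
  assert (Hh : 0 < h).
  { destruct Hh0 as [Hh|Hh]; auto. subst h. apply K_zero in HI1; auto.
    rewrite HI1 in E1. assert (exp (- (sigma ^ 2 * p ^ 2 / 2)) < exp 0) by (apply exp_increasing; lra).
    rewrite exp_0 in H. lra. }
  rewrite <- E1. split; auto. split.
  - apply K_lower; auto.
  - intros S2 HS2a HS2b Hh1. apply K_exact; auto.
Qed.

Lemma lim_of_eps (f : R -> R) :
  (forall e, 0 < e -> exists d, 0 < d /\ forall p, p <> 0 -> Rabs p < d -> Rabs (f p - 1) < e) ->
  is_lim f 0 1.
Proof.
  intros H P [eps Heps]. destruct (H eps (cond_pos eps)) as [d [Hd Hf]].
  exists (mkposreal d Hd). intros y Hy Hy0. apply Heps. apply ball_R.
  apply Hf; auto. assert (Hy2 : Rabs (y - 0) < d) by (apply ball_R; exact Hy). rewrite Rminus_0_r in Hy2. exact Hy2.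
Qed.

Lemma rp_cont1 z e : 0 < e -> exists d, 0 < d /\ forall y, Rabs (y - 1) < d -> Rabs (Rpower y z - 1) < e.
Proof.
  intros He.
  assert (Hc : continuity_pt (fun y => Rpower y z) 1).
  { apply derivable_continuous_pt. exists (z * Rpower 1 (z - 1)). apply derivable_pt_lim_power. lra. }
  destruct (Hc e He) as [d [Hd Hd']]. exists d. split; auto.
  intros y Hy. destruct (Req_dec y 1) as [->|Hne].
  - rewrite rp_one. rewrite Rminus_diag, Rabs_R0. lra.
  - specialize (Hd' y). simpl in Hd'. unfold R_dist in Hd'. rewrite rp_one in Hd'. apply Hd'.
    split; auto. unfold D_x, no_cond. split; auto.
Qed.

Lemma lowb mu h : 0 < mu < 1 -> 0 < h ->
  Rpower (h / (h + 1)) mu * (1 - exp (- (1))) <= Rpower h mu * exp h * RInt (gf mu) h (h + 1).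
Proof.
  intros Hm Hh.
  assert (HL := G_lb mu h (h + 1) Hm ltac:(lra)).
  assert (HC : 0 < Rpower h mu * exp h) by (apply Rmult_lt_0_compat; [apply rp_pos| apply exp_pos]).
  eapply Rle_trans; [|apply Rmult_le_compat_l; [lra| exact HL]].
  right. unfold Rdiv. rewrite <- Rpower_mult_distr by (try apply Rinv_0_lt_compat; lra).
  rewrite rp_inv, <- Rpower_Ropp by lra.
  replace (exp (- (h + 1))) with (exp (- h) * exp (- (1))) by (rewrite <- exp_plus; f_equal; ring).
  assert (E : exp h * exp (- h) = 1) by (rewrite <- exp_plus; replace (h + - h) with 0 by ring; apply exp_0).
  transitivity (Rpower h mu * Rpower (h + 1) (- mu) * (exp h * exp (- h)) * (1 - exp (- (1)))); [rewrite E; ring| ring].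
Qed.

Lemma h_small mu h eta : 0 < mu < 1 -> 0 < h -> 0 < eta ->
  Rpower h mu * exp h * RInt (gf mu) h (h + 1) < Rpower (eta / (eta + 1)) mu * (1 - exp (- (1))) -> h < eta.
Proof.
  intros Hm Hh He Hlt. apply Rnot_le_lt. intros Hle.
  assert (H1 := lowb mu h Hm Hh).
  assert (H2 : Rpower (eta / (eta + 1)) mu <= Rpower (h / (h + 1)) mu).
  { apply Rle_Rpower_l; [lra|]. split. apply Rdiv_lt_0_compat; lra.
    unfold Rdiv. apply (Rmult_le_reg_r ((eta + 1) * (h + 1))). nra.
    replace (eta * / (eta + 1) * ((eta + 1) * (h + 1))) with (eta * (h + 1)) by (field; lra).
    replace (h * / (h + 1) * ((eta + 1) * (h + 1))) with (h * (eta + 1)) by (field; lra). nra. }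
  assert (H3 : 0 < 1 - exp (- (1))).
  { assert (exp (- (1)) < exp 0) by (apply exp_increasing; lra). rewrite exp_0 in H. lra. }
  assert (Rpower (eta / (eta + 1)) mu * (1 - exp (- (1))) <= Rpower (h / (h + 1)) mu * (1 - exp (- (1)))) by
    (apply Rmult_le_compat_r; lra).
  lra.
Qed.

Theorem proposition2 (mu sigma : R) (H : R -> R) :
  0 < mu < 1 -> 0 < sigma ->
  (forall p : R, H_equation mu sigma p (H p)) ->
  (forall p h : R, H_equation mu sigma p h -> h = H p) ->
  is_lim
    (fun p => H p / (Rpower ((sigma * p) ^ 2) (1 / mu) * Rpower (2 * Gamma (1 - mu)) (- (1 / mu))))
    0 1.
Proof.
  intros Hm Hs Hex _.
  destruct (gamma_facts mu Hm) as [S1 [S2 [S2a [S2b [S1a [S1b [S1c HG]]]]]]].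
  set (G0 := Gamma (1 - mu)) in *.
  assert (HS1 : 0 <= S1).
  { assert (HH := S1a (/ 2) ltac:(lra)). assert (HH2 := G_ge0 mu (/ 2) 1 ltac:(lra)). lra. }
  assert (HS2 : 0 < S2).
  { assert (HH := S2a 2 ltac:(lra)). assert (HH2 := G_lb mu 1 2 Hm ltac:(lra)).
    assert (0 < Rpower 2 (- mu) * (exp (- (1)) - exp (- (2)))).
    { apply Rmult_lt_0_compat. apply rp_pos. assert (exp (- (2)) < exp (- (1))) by (apply exp_increasing; lra). lra. }
    lra. }
  assert (HG0 : 0 < G0) by lra.
  apply lim_of_eps. intros e He.
  destruct (rp_cont1 (1 / mu) e He) as [d1 [Hd1 Hd1']].
  set (d2 := Rmin d1 (/ 2)).
  assert (Hd2 : 0 < d2 <= / 2 /\ d2 <= d1). { unfold d2. split. split. apply Rmin_glb_lt; lra. apply Rmin_r. apply Rmin_l. }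
  set (kap := (1 - mu) * G0 * d2 / 4).
  assert (Hkap : 0 < kap). { unfold kap. assert (0 < (1 - mu) * G0) by (apply Rmult_lt_0_compat; lra). nra. }
  set (eta := Rmin (Rmin (/ 2) (d2 / 2)) (Rpower kap (1 / (1 - mu)))).
  assert (Heta : 0 < eta /\ eta <= / 2 /\ eta <= d2 / 2 /\ eta <= Rpower kap (1 / (1 - mu))).
  { unfold eta. assert (HH := rp_pos kap (1 / (1 - mu))). split; [|split; [|split]].
    - apply Rmin_glb_lt; [apply Rmin_glb_lt|]; lra.
    - eapply Rle_trans; [apply Rmin_l| apply Rmin_l].
    - eapply Rle_trans; [apply Rmin_l| apply Rmin_r].
    - apply Rmin_r. }
  set (ceta := Rpower (eta / (eta + 1)) mu * (1 - exp (- (1)))).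
  assert (Hceta : 0 < ceta).
  { unfold ceta. apply Rmult_lt_0_compat. apply rp_pos.
    assert (exp (- (1)) < exp 0) by (apply exp_increasing; lra). rewrite exp_0 in H0. lra. }
  set (m := Rmin (d2 / 2) ceta).
  assert (Hm' : 0 < m /\ m <= d2 / 2 /\ m <= ceta). { unfold m. split. apply Rmin_glb_lt; lra. split. apply Rmin_l. apply Rmin_r. }
  assert (Hsig2 : 0 < sigma ^ 2) by (apply pow_lt; lra).
  exists (Rmin 1 (2 * m / sigma ^ 2)). split.
  { apply Rmin_glb_lt; [lra|]. apply Rdiv_lt_0_compat; lra. }
  intros p Hp Hpd.
  assert (Hp1 : Rabs p < 1) by (eapply Rlt_le_trans; [exact Hpd| apply Rmin_l]).
  assert (Hp2 : Rabs p < 2 * m / sigma ^ 2) by (eapply Rlt_le_trans; [exact Hpd| apply Rmin_r]).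
  set (x := sigma ^ 2 * p ^ 2 / 2).
  assert (Hx : 0 < x < m).
  { assert (Hpp : p ^ 2 = Rabs p * Rabs p) by (rewrite <- Rabs_mult; simpl; rewrite Rmult_1_r; symmetry; apply Rabs_pos_eq; nra).
    assert (0 < Rabs p) by (apply Rabs_pos_lt; auto).
    assert (p ^ 2 < 2 * m / sigma ^ 2) by nra.
    unfold x. split. assert (0 < p ^ 2) by nra. nra.
    apply (Rmult_lt_compat_l (sigma ^ 2)) in H1; [|lra].
    replace (sigma ^ 2 * (2 * m / sigma ^ 2)) with (2 * m) in H1 by (field; lra). lra. }
  destruct (per_p mu sigma p (H p) Hm Hs Hp (Hex p)) as [Hh [HL HE]].
  set (h := H p) in *. fold x in HL, HE.
  set (T := 1 - exp (- x)) in *.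
  assert (HT : x * exp (- x) <= T <= x).
  { unfold T. assert (H1 := exp_ineq1_le (- x)). assert (H2 := exp_ineq1_le x).
    assert (E : exp x * exp (- x) = 1) by (rewrite <- exp_plus; replace (x + - x) with 0 by ring; apply exp_0).
    assert (H3 := exp_pos (- x)). nra. }
  assert (Hhe : h < eta).
  { apply (h_small mu h eta Hm Hh ltac:(lra)). fold ceta. lra. }
  specialize (HE S2 S2a S2b ltac:(lra)).
  set (A := Rpower h mu) in *.
  set (V := RInt (gf mu) h 1 + S2) in *.
  assert (HA : 0 < A) by apply rp_pos.
  set (dd := Rpower h (1 - mu) / (1 - mu)).
  assert (Hdd : 0 <= dd < G0 * d2 / 4).
  { unfold dd. split. apply Rlt_le, Rdiv_lt_0_compat; [apply rp_pos| lra].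
    assert (Rpower h (1 - mu) < kap).
    { apply Rlt_le_trans with (Rpower (Rpower kap (1 / (1 - mu))) (1 - mu)).
      - apply Rlt_Rpower_l; lra.
      - right. rewrite Rpower_mult. replace (1 / (1 - mu) * (1 - mu)) with 1 by (field; lra). apply Rpower_1; lra. }
    unfold kap in H0. apply Rlt_div_l; lra. }
  assert (HV1 : V <= G0) by (unfold V; rewrite HG; assert (HH := S1a h ltac:(lra)); lra).
  assert (HV2 : G0 - dd <= V) by (unfold V, dd; rewrite HG; assert (HH := S1c h ltac:(lra)); lra).
  assert (HVp : G0 / 2 <= V). { assert (G0 * d2 / 4 <= G0 / 2) by nra. lra. }
  set (Q := A * (2 * G0) / (sigma * p) ^ 2).
  assert (Hsp : (sigma * p) ^ 2 = 2 * x) by (unfold x; field).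
  assert (HQid : Q * V * exp h * x = T * G0).
  { unfold Q. rewrite Hsp. rewrite HE. field. lra. }
  assert (HQ : 0 < Q). { unfold Q. rewrite Hsp. apply Rdiv_lt_0_compat; nra. }
  assert (Heh : 1 <= exp h) by (assert (HH := exp_ineq1_le h); lra).
  assert (HQ1 : Rabs (Q - 1) < d1).
  { apply Rabs_lt_between. split.
    -
      assert (L1 : exp (- x) * G0 <= Q * V * exp h).
      { apply (Rmult_le_reg_r x); [lra|]. rewrite HQid. nra. }
      assert (L2 : exp (- x) <= Q * exp h).
      { apply (Rmult_le_reg_r V); [lra|]. assert (0 <= exp (- x)) by (left; apply exp_pos). nra. }
      assert (L3 : exp (- x) * exp (- h) <= Q).
      { assert (E : exp h * exp (- h) = 1) by (rewrite <- exp_plus; replace (h + - h) with 0 by ring; apply exp_0).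
        assert (0 < exp (- h)) by apply exp_pos. nra. }
      rewrite <- exp_plus in L3. assert (L4 := exp_ineq1_le (- x + - h)). lra.
    -
      assert (U1 : Q * V * exp h <= G0).
      { apply (Rmult_le_reg_r x); [lra|]. rewrite HQid. nra. }
      assert (U2 : Q * V <= G0). { assert (0 < Q * V) by nra. nra. }
      assert (U3 : (Q - 1) * V <= dd) by lra.
      apply Rnot_le_lt. intros Hc.
      assert ((Q - 1) * V >= d1 * (G0 / 2)) by nra.
      assert (G0 * d2 / 4 <= d1 * (G0 / 2)) by nra. lra. }
  specialize (Hd1' Q HQ1).
  replace (h / (Rpower ((sigma * p) ^ 2) (1 / mu) * Rpower (2 * G0) (- (1 / mu)))) with (Rpower Q (1 / mu)); auto.
  assert (Hsp2 : 0 < (sigma * p) ^ 2) by (rewrite Hsp; lra).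
  unfold Q. unfold Rdiv at 1. rewrite <- !Rpower_mult_distr by (try apply Rinv_0_lt_compat; nra).
  rewrite rp_inv by auto. unfold A. rewrite Rpower_mult. replace (mu * (1 / mu)) with 1 by (field; lra).
  rewrite Rpower_1 by auto. rewrite Rpower_Ropp.
  assert (0 < Rpower ((sigma * p) ^ 2) (1 / mu)) by apply rp_pos.
  assert (0 < Rpower (2 * G0) (1 / mu)) by apply rp_pos.
  rewrite (Rpower_Ropp G0). assert (0 < Rpower 2 (1 / mu)) by apply rp_pos. assert (0 < Rpower G0 (1 / mu)) by apply rp_pos. field. repeat split; lra.
Qed.
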